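(* Let $0<\theta<1$ and let $X$ be a random variable on $\{0,1,2,\dots\}$ with probability mass function \[f(x)=\frac{\theta^x}{x!}-\frac{\theta^{x+1}}{(x+1)!},\quad x=0,1,2,\dots.\] Then the moment generating function of $X$ is $M_X(t)=e^{\theta e^t}(1-e^{-t})+e^{-t}$ for all real $t$, and \[\mathbb E(X)=e^{\theta}-1,\qquad \mathrm{Var}(X)=e^{\theta}\bigl(2\theta+1-e^{\theta}\bigr).\] *)

(* Defs.v *)
From Stdlib Require Import Reals Arith.
From Coquelicot Require Import Coquelicot.
Open Scope R_scope.

Definition pmf (theta : R) (x : nat) : R :=
  theta ^ x / INR (fact x) - theta ^ (S x) / INR (fact (S x)).

Definition mgf_is (f : nat -> R) (t : R) (m : R) : Prop :=
  is_series (fun x => exp (t * INR x) * f x) m.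

Definition mean_is (f : nat -> R) (mu : R) : Prop :=
  is_series (fun x => INR x * f x) mu.

Definition var_is (f : nat -> R) (v : R) : Prop :=
  exists mu, mean_is f mu /\ is_series (fun x => (INR x - mu) ^ 2 * f x) v.

(* Main.v *)
Require Import Defs.
From Stdlib Require Import Reals Lra Lia Arith.
From Coquelicot Require Import Coquelicot.
Open Scope R_scope.

Lemma sR_plus (a b : nat -> R) (la lb : R) : is_series a la -> is_series b lb ->
  is_series (fun n => a n + b n) (la + lb).
Proof. intros; apply (is_series_plus a b); auto. Qed.

Lemma sR_scal (c : R) (a : nat -> R) (l : R) : is_series a l ->
  is_series (fun n => c * a n) (c * l).
Proof. intros; apply (is_series_scal c a); auto. Qed.

Lemma sR_ext (a b : nat -> R) (l l' : R) : (forall n, a n = b n) -> l = l' ->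
  is_series a l -> is_series b l'.
Proof. intros H -> ; apply is_series_ext; auto. Qed.

Definition ea (c : R) (n : nat) := c ^ n / INR (fact n).

Lemma fact_nz n : INR (fact n) <> 0.
Proof. apply not_0_INR, fact_neq_0. Qed.

Lemma ea_S c n : INR (S n) * ea c (S n) = c * ea c n.
Proof.
  unfold ea. change (fact (S n)) with (S n * fact n)%nat.
  rewrite mult_INR. simpl pow. assert (H := fact_nz n).
  assert (INR (S n) <> 0) by (apply not_0_INR; lia). field; auto.
Qed.

Lemma E0 c : is_series (ea c) (exp c).
Proof.
  assert (H := is_exp_Reals c). unfold is_pseries in H.
  revert H; apply sR_ext; [intro n|reflexivity]. unfold ea, scal; simpl. unfold mult; simpl. rewrite pow_n_pow. unfold Rdiv. ring.
Qed.

Lemma Es c : is_series (fun n => ea c (S n)) (exp c - 1).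
Proof.
  apply (is_series_incr_1 (ea c)). generalize (E0 c); apply sR_ext; auto.
  unfold ea; simpl. unfold plus; simpl. field.
Qed.

Lemma E1 c : is_series (fun n => INR n * ea c n) (c * exp c).
Proof.
  apply (is_series_decr_1 (fun n => INR n * ea c n)).
  generalize (sR_scal c _ _ (E0 c)). apply sR_ext.
  - intro n. rewrite ea_S; auto.
  - simpl. unfold plus, opp; simpl. ring.
Qed.

Lemma E2 c : is_series (fun n => INR n ^ 2 * ea c n) (c * (c + 1) * exp c).
Proof.
  apply (is_series_decr_1 (fun n => INR n ^ 2 * ea c n)).
  generalize (sR_scal c _ _ (sR_plus _ _ _ _ (E1 c) (E0 c))). apply sR_ext.
  - intro n. replace (INR (S n) ^ 2 * ea c (S n)) with (INR (S n) * (INR (S n) * ea c (S n))) by ring.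
    rewrite ea_S, S_INR. ring.
  - simpl. unfold plus, opp; simpl. ring.
Qed.

Lemma pmf_ea th n : pmf th n = ea th n - ea th (S n).
Proof. reflexivity. Qed.

Lemma exp_pow t n : exp (t * INR n) = exp t ^ n.
Proof.
  induction n. simpl. rewrite Rmult_0_r, exp_0; auto.
  rewrite S_INR, Rmult_plus_distr_l, exp_plus, IHn, Rmult_1_r. simpl; ring.
Qed.

Lemma x_eaS c n : INR n * ea c (S n) = c * ea c n - ea c (S n).
Proof. rewrite <- ea_S, S_INR. ring. Qed.

Theorem mainTheorem4 (theta : R) (Htheta : 0 < theta < 1) :
  (forall t : R,
     mgf_is (pmf theta) t (exp (theta * exp t) * (1 - exp (- t)) + exp (- t)))
  /\ mean_is (pmf theta) (exp theta - 1)
  /\ var_is (pmf theta) (exp theta * (2 * theta + 1 - exp theta)).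
Proof.
  set (th := theta).
  assert (Hm : mean_is (pmf th) (exp th - 1)).
  { unfold mean_is.
    generalize (sR_plus _ _ _ _ (sR_plus _ _ _ _ (E1 th) (sR_scal (-th) _ _ (E0 th))) (Es th)).
    apply sR_ext.
    - intro n. rewrite pmf_ea. rewrite Rmult_minus_distr_l, x_eaS. ring.
    - ring. }
  split; [|split; auto].
  - intro t. unfold mgf_is. set (c := th * exp t).
    generalize (sR_plus _ _ _ _ (E0 c) (sR_scal (- exp (-t)) _ _ (Es c))).
    apply sR_ext.
    + intro n. rewrite pmf_ea, exp_pow. unfold ea, c. simpl pow.
      rewrite !Rpow_mult_distr.
      assert (H1 := fact_nz n). assert (H2 := fact_nz (S n)).
      assert (H3 : exp t <> 0) by (apply Rgt_not_eq, exp_pos).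
      rewrite exp_Ropp. field; auto.
    + ring.
  - exists (exp th - 1). split; auto.
    set (mu := exp th - 1).
    generalize (sR_plus _ _ _ _
      (sR_plus _ _ _ _ (E2 th) (sR_scal (- 2 * mu - th) _ _ (E1 th)))
      (sR_plus _ _ _ _ (sR_scal (mu ^ 2 + th + 2 * mu * th) _ _ (E0 th))
                       (sR_scal (- 1 - 2 * mu - mu ^ 2) _ _ (Es th)))).
    apply sR_ext.
    + intro n. rewrite pmf_ea.
      assert (K : INR n ^ 2 * ea th (S n) = th * (INR n * ea th n) - th * ea th n + ea th (S n)).
      { replace (INR n ^ 2 * ea th (S n)) with (INR n * (INR n * ea th (S n))) by ring.
        rewrite x_eaS. replace (INR n * (th * ea th n - ea th (S n))) with
          (th * (INR n * ea th n) - INR n * ea th (S n)) by ring.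
        rewrite x_eaS. ring. }
      assert (K1 := x_eaS th n).
      replace ((INR n - mu) ^ 2 * (ea th n - ea th (S n))) with
        (INR n ^ 2 * ea th n - 2 * mu * (INR n * ea th n) + mu ^ 2 * ea th n
         - INR n ^ 2 * ea th (S n) + 2 * mu * (INR n * ea th (S n)) - mu ^ 2 * ea th (S n)) by ring.
      rewrite K, K1. ring.
    + unfold mu. ring.
Qed.
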